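(* Let $m\ge2$, let $\eta$ be a primitive $m$-th root of unity, and let $F(x,y)=(x+y)^m$. Suppose $G(x,y)$ is a real polynomial such that $G(\eta x,\eta y)=G(x,y)$, $G=1$ on the line $x+y=1$, $G$ has only non-negative coefficients, $G(0,0)=0$, and $G$ has degree $Km$ for a positive integer $K$. Then there are real homogeneous polynomials $H_{jm}$ of degree $jm$ (or zero), $1\le j\le K-1$, such that $$G=(F-H_m)+(FH_m-H_{2m})+\dots+(FH_{(K-2)m}-H_{(K-1)m})+FH_{(K-1)m}$$ (for $K=1$ this reads $G=F$). If the $H_{jm}$ have non-negative coefficients, then $N(G)\ge Km+1$.
   Context: $N(q)$ denotes the number of distinct monomials with nonzero coefficient in the polynomial $q$. *)

(* Defs.v *)
From HB Require Import structures.
From mathcomp Require Import all_boot all_order all_algebra.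
From mathcomp Require Import mpoly.
From mathcomp Require Import complex.
Set Implicit Arguments. Unset Strict Implicit. Unset Printing Implicit Defensive.
Import Order.TTheory GRing.Theory Num.Theory.
Local Open Scope ring_scope.

Definition Fpoly (R : ringType) (m : nat) : {mpoly R[2]} :=
  ('X_0 + 'X_1) ^+ m.

Definition Nmon (R : ringType) (q : {mpoly R[2]}) : nat := size (msupp q).

Definition nonneg_coefs (R : numDomainType) (q : {mpoly R[2]}) : Prop :=
  forall mo : 'X_{1..2}, 0 <= q@_mo.

(* H extended by H_0 = 1 and H_{Km} = 0; index j stands for H_{jm} *)
Definition Hext (R : ringType) (K : nat) (H : nat -> {mpoly R[2]}) (j : nat)
  : {mpoly R[2]} :=
  if j == 0%N then 1 else if j == K then 0 else H j.

(* (F - H_m) + (F H_m - H_2m) + ... + (F H_{(K-2)m} - H_{(K-1)m}) + F H_{(K-1)m} *)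
Definition telescope (R : ringType) (m K : nat) (H : nat -> {mpoly R[2]})
  : {mpoly R[2]} :=
  \sum_(1 <= j < K.+1) (Fpoly R m * Hext K H j.-1 - Hext K H j).

Definition cplx (R : rcfType) (q : {mpoly R[2]}) : {mpoly R[i][2]} :=
  map_mpoly (real_complex R) q.

Definition pt (T : Type) (x y : T) : 'I_2 -> T := tnth [tuple x; y].

(* Main.v *)
Require Import Defs.
From HB Require Import structures.
From mathcomp Require Import all_boot all_order all_algebra.
From mathcomp Require Import mpoly.
From mathcomp Require Import complex.
Import Order.TTheory GRing.Theory Num.Theory.
Local Open Scope ring_scope.

Lemma big_pred1_seq (T : eqType) (V : zmodType) (s : seq T) (a : T)
  (F : T -> V) : uniq s -> a \in s -> \sum_(x <- s | x == a) F x = F a.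
Proof.
move=> us ain; rewrite -big_filter.
have -> : [seq x <- s | x == a] = [:: a] by apply: filter_pred1_uniq.
by rewrite big_seq1.
Qed.

Section Gen.
Variables (n : nat) (R : nzRingType).

Lemma mcoeff_hc d (P : {mpoly R[n]}) mo :
  (pihomog mdeg d P)@_mo = if mdeg mo == d then P@_mo else 0.
Proof.
rewrite pihomogE raddf_sum /=.
under eq_bigr => x _ do rewrite mcoeffZ mcoeffX.
have [inP|notinP] := boolP (mo \in msupp P).
  rewrite big_mkcond (bigD1_seq mo) ?msupp_uniq //= big1 ?addr0.
    by case: (mdeg mo == d); rewrite ?eqxx ?mulr1.
  by move=> x /negbTE; rewrite eq_sym => ->; rewrite mulr0; case: ifP.
rewrite big_seq_cond big1; first by rewrite (memN_msupp_eq0 notinP); case: ifP.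
move=> x /andP[xin _]; have -> : (x == mo) = false.
  by apply/negbTE; apply: contraNneq notinP => <-.
by rewrite mulr0.
Qed.

End Gen.

From mathcomp Require Import ring lra zify.
Notation i1 := (lift ord0 (ord0 : 'I_1)).

Lemma mdeg2 (mo : 'X_{1..2}) : mdeg mo = (mo ord0 + mo i1)%N.
Proof. by rewrite mdegE !big_ord_recl big_ord0 addn0. Qed.

Lemma meval_pt (R : comNzRingType) (P : {mpoly R[2]}) x y :
  P.@[pt x y] = \sum_(mo <- msupp P) P@_mo * (x ^+ (mo ord0) * y ^+ (mo i1)).
Proof.
by rewrite mevalE; apply: eq_bigr => mo _; rewrite !big_ord_recl big_ord0 mulr1.
Qed.

Lemma meval_scale (R : comNzRingType) d (P : {mpoly R[2]}) s a b :
  P \is d.-homog -> P.@[pt (s * a) (s * b)] = s ^+ d * P.@[pt a b].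
Proof.
move=> hP; rewrite !meval_pt mulr_sumr big_seq [RHS]big_seq.
apply: eq_bigr => mo mo_in; have Hd : mdeg mo = d := dhomog_mf hP mo_in.
rewrite mdeg2 in Hd; rewrite -Hd.
rewrite exprD !exprMn.
move: (s ^+ mo ord0) (s ^+ mo i1) (a ^+ mo ord0) (b ^+ mo i1) => u v w z; ring.
Qed.

Lemma poly_nat_roots (R : numDomainType) (p : {poly R}) :
  (forall k : nat, p.[k.+1%:R] = 0) -> p = 0.
Proof.
move=> h; apply/eqP; apply/negPn/negP => nz.
pose rs := [seq k.+1%:R | k <- iota 0 (size p)] : seq R.
have H1 : all (root p) rs by apply/allP => x /mapP [k _ ->]; rewrite /root h.
have H2 : uniq rs.
  by rewrite map_inj_uniq ?iota_uniq // => i j /eqP; rewrite eqr_nat eqSS => /eqP.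
by have := max_poly_roots nz H1 H2; rewrite size_map size_iota ltnn.
Qed.

Lemma mnm2P (x y : 'X_{1..2}) : x ord0 = y ord0 -> x i1 = y i1 -> x = y.
Proof.
move=> h0 h1; apply/mnmP => -[[|[|i]] Hi].
- by have -> : Ordinal Hi = ord0 by apply: val_inj.
- by have -> : Ordinal Hi = i1 by apply: val_inj.
- by [].
Qed.

Lemma homog_zero (R : numDomainType) d (P : {mpoly R[2]}) :
  P \is d.-homog -> (forall k : nat, P.@[pt 1 k.+1%:R] = 0) -> P = 0.
Proof.
move=> hP h.
pose q : {poly R} := \sum_(mo <- msupp P) P@_mo *: 'X^(mo i1).
have qE t : q.[t] = P.@[pt 1 t].
  rewrite meval_pt horner_sum; apply: eq_bigr => mo _.
  by rewrite hornerZ hornerXn expr1n mul1r.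
have q0 : q = 0 by apply: poly_nat_roots => k; rewrite qE h.
apply/eqP; rewrite -msupp_eq0; case E: (msupp P) => [|mo s] //.
have mo_in : mo \in msupp P by rewrite E mem_head.
have : q`_(mo i1) = P@_mo.
  rewrite coef_sum (bigD1_seq mo) ?msupp_uniq //= coefZ coefXn eqxx mulr1.
  rewrite big1_seq ?addr0 // => x /andP[xnmo xin].
  rewrite coefZ coefXn; case: eqP => [e|]; last by rewrite mulr0.
  have dx : mdeg x = d := dhomog_mf hP xin.
  have dm : mdeg mo = d := dhomog_mf hP mo_in.
  rewrite !mdeg2 in dx dm.
  by move: xnmo; rewrite (@mnm2P x mo) ?eqxx //; lia.
rewrite q0 coef0 => /esym/eqP; rewrite mcoeff_eq0 mo_in //.
Qed.

Notation z0 := (0%R : 'I_2).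
Notation z1 := (1%R : 'I_2).

Lemma nonneg_mul (R : numDomainType) (P Q : {mpoly R[2]}) :
  nonneg_coefs P -> nonneg_coefs Q -> nonneg_coefs (P * Q).
Proof.
move=> hP hQ mo; rewrite mcoeffM; apply: sumr_ge0 => k _; exact: mulr_ge0.
Qed.

Lemma nonnegX (R : numDomainType) (u : 'X_{1..2}) : nonneg_coefs ('X_[u] : {mpoly R[2]}).
Proof. by move=> mo; rewrite mcoeffX ler0n. Qed.

Lemma argmax_seq (T : eqType) (s : seq T) (f : T -> nat) :
  s != [::] -> exists2 x, x \in s & forall y, y \in s -> (f y <= f x)%N.
Proof.
elim: s => [//|a s IH] _; case: s IH => [|b s] IH.
  by exists a => [|y]; rewrite ?mem_seq1 // => /eqP ->.
have [x xin xmax] := IH isT.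
have [le|lt] := leqP (f a) (f x).
  exists x; first by rewrite in_cons xin orbT.
  by move=> y; rewrite in_cons => /orP[/eqP ->|/xmax].
exists a; first exact: mem_head.
move=> y; rewrite in_cons => /orP[/eqP ->//|/xmax H]; exact: leq_trans H (ltnW lt).
Qed.

Lemma step_supp (R : numDomainType) (B : {mpoly R[2]}) :
  nonneg_coefs B -> B != 0 ->
  nonneg_coefs (('X_0 + 'X_1) * B) /\
  leq (size (msupp B)).+1 (size (msupp (('X_0 + 'X_1) * B))).
Proof.
move=> hB nzB.
have E : ('X_0 + 'X_1) * B = B * 'X_[U_(z0)] + B * 'X_[U_(z1)] by rewrite mulrC mulrDr.
have nn1 : nonneg_coefs (B * 'X_[U_(z0)]) by apply: nonneg_mul => //; apply: nonnegX.
have nn2 : nonneg_coefs (B * 'X_[U_(z1)]) by apply: nonneg_mul => //; apply: nonnegX.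
have pos : forall a, a \in msupp B -> 0 < B@_a.
  by move=> a; rewrite mcoeff_msupp lt_def => ->; rewrite hB.
rewrite E; split; first by move=> mo; rewrite mcoeffD addr_ge0.
have ne : msupp B != [::] by rewrite msupp_eq0.
have [a ain amax] := @argmax_seq _ (msupp B) (fun x : 'X_{1..2} => x ord0) ne.
pose L := [seq (U_(z1) + x)%MM | x <- msupp B] ++ [:: (U_(z0) + a)%MM].
have uL : uniq L.
  rewrite cat_uniq /= orbF andbT map_inj_uniq ?msupp_uniq /=; last exact: addmI.
  apply/mapP => -[x xin] /(congr1 (fun u : 'X_{1..2} => u ord0)).
  rewrite !mnmDE !mnm1E /=; have := amax x xin => /= ; lia.
have sL : {subset L <= msupp (B * 'X_[U_(z0)] + B * 'X_[U_(z1)])}.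
  move=> z; rewrite mem_cat mem_seq1 => /orP[/mapP [x xin ->]|/eqP ->].
    rewrite mcoeff_msupp mcoeffD [X in _ + X]mcoeffMX; apply: lt0r_neq0.
    by apply: ltr_wpDl; [apply: nn1| apply: pos].
  rewrite mcoeff_msupp mcoeffD [X in X + _]mcoeffMX; apply: lt0r_neq0.
  by apply: ltr_wpDr; [apply: nn2| apply: pos].
by have := uniq_leq_size uL sL; rewrite size_cat size_map addn1.
Qed.

Lemma F_supp (R : numDomainType) m (A : {mpoly R[2]}) :
  nonneg_coefs A -> A != 0 ->
  nonneg_coefs (Fpoly R m * A) /\
  leq (size (msupp A) + m) (size (msupp (Fpoly R m * A))).
Proof.
move=> hA nzA; elim: m => [|m [IH1 IH2]].
  by rewrite /Fpoly expr0 mul1r addn0.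
have nz : Fpoly R m * A != 0.
  apply/negP => /eqP e; move: IH2; rewrite e msupp0 /=.
  by move: nzA; rewrite -msupp_eq0; case: (msupp A).
have [H1 H2] := @step_supp _ (Fpoly R m * A) IH1 nz.
rewrite /Fpoly exprS -mulrA; split => //.
by rewrite addnS; exact: leq_trans H2.
Qed.

Lemma supp_sub (R : nzRingType) (P B : {mpoly R[2]}) :
  leq (size (msupp P)) (size (msupp (P - B)) + size (msupp B)).
Proof.
rewrite -size_cat; apply: uniq_leq_size; first exact: msupp_uniq.
move=> z zin; apply: (@msuppD_le _ _ (P - B) B).
by rewrite subrK.
Qed.

Lemma hc_size (R : nzRingType) d (P : {mpoly R[2]}) :
  leq (size (msupp (pihomog mdeg d P))) (count (fun mo => mdeg mo == d) (msupp P)).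
Proof.
rewrite -size_filter; apply: uniq_leq_size; first exact: msupp_uniq.
move=> z; rewrite mcoeff_msupp mcoeff_hc mem_filter mcoeff_msupp.
by case: (mdeg z == d); rewrite ?eqxx.
Qed.

Lemma count_sum (T : eqType) (s : seq T) (f : T -> nat) K m : (0 < m)%N ->
  leq (\sum_(1 <= j < K.+1) count (fun x => f x == j * m)%N s) (size s).
Proof.
move=> m0; elim: s => [|x s IH] /=.
  by rewrite big1.
rewrite big_split /=.
rewrite -[(size s).+1]add1n; apply: leq_add => //.
have -> : (\sum_(1 <= j < K.+1) nat_of_bool (f x == j * m) = count (fun j => f x == j * m) (index_iota 1 K.+1))%N.
  by rewrite -sum1_count [RHS]big_mkcond; apply: eq_bigr => j _; case: ifP.
apply: leq_trans (_ : count (pred1 (f x %/ m)) (index_iota 1 K.+1) <= 1)%N.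
  apply: sub_count => j /= /eqP ->; by rewrite mulnK.
by rewrite count_uniq_mem ?leq_b1 // /index_iota iota_uniq.
Qed.

Lemma F_homog (R : nzRingType) m : Fpoly R m \is m.-homog.
Proof.
rewrite /Fpoly -[X in X.-homog]mul1n; apply: dhomogMn.
by apply: rpredD; rewrite dhomogX; apply/eqP; exact: mdeg1.
Qed.

Lemma part2 (R : numDomainType) m K (G : {mpoly R[2]}) (H : nat -> {mpoly R[2]}) :
  (0 < m)%N -> (0 < K)%N -> nonneg_coefs G -> msize G = (K * m).+1 ->
  (forall j, (1 <= j <= K.-1)%N -> H j \is (j * m).-homog) ->
  G = telescope m K H ->
  (forall j, (1 <= j <= K.-1)%N -> nonneg_coefs (H j)) ->
  ((K * m).+1 <= Nmon G)%N.
Proof.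
move=> m0 K0 nnG szG hH hG nH.
pose E := Hext K H.
have hE : forall i, (i <= K)%N -> E i \is (i * m).-homog.
  move=> i iK; rewrite /E /Hext; case: eqP => [->|i0]; first by rewrite mul0n dhomog1.
  case: eqP => [_|iK']; first exact: rpred0.
  apply: hH; lia.
have nE : forall i, (i <= K)%N -> nonneg_coefs (E i).
  move=> i iK mo; rewrite /E /Hext; case: eqP => [_|i0]; first by rewrite mcoeff1 ler0n.
  case: eqP => [_|iK']; first by rewrite mcoeff0.
  apply: nH; lia.
pose T j := Fpoly R m * E j.-1 - E j.
have hT : forall j, (1 <= j <= K)%N -> T j \is (j * m).-homog.
  move=> j jK; apply: rpredB; last by apply: hE; lia.
  rewrite (_ : (j * m = m + j.-1 * m)%N); last by case: j jK => //= j _; rewrite mulSn.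
  apply: dhomogM; [exact: F_homog | apply: hE; lia].
have hcT : forall j, (1 <= j <= K)%N -> pihomog mdeg (j * m) G = T j.
  move=> j jK; rewrite hG /telescope raddf_sum /=.
  rewrite (bigD1_seq j) /=; last exact: iota_uniq.
    2: by rewrite mem_index_iota; lia.
  rewrite pihomog_dE; last exact: hT.
  rewrite big1_seq ?addr0 // => i /andP[ij iin].
  rewrite mem_index_iota in iin.
  apply: (pihomog_ne0 (d := (i * m)%N)); last by apply: hT; lia.
  by rewrite eqn_pmul2r.
have nnT : forall j, (1 <= j <= K)%N -> nonneg_coefs (T j).
  move=> j jK mo; rewrite -hcT // mcoeff_hc; case: ifP => _ //; exact: nnG.
have G0 : G != 0 by apply/negP => /eqP G0; move: szG; rewrite G0 msize0.
have nzE : forall i, (i < K)%N -> E i != 0.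
  move=> i0 i0K; apply/negP => /eqP Ei0.
  have chain : forall k, (i0 + k < K)%N -> E (i0 + k)%N = 0.
    elim => [|k IH] ik; first by rewrite addn0.
    have Ek : E (i0 + k)%N = 0 by apply: IH; lia.
    rewrite addnS; apply/mpolyP => mo; rewrite mcoeff0.
    have b : (1 <= (i0 + k).+1 <= K)%N by lia.
    have := nnT _ b mo; rewrite /T /= Ek mulr0 sub0r mcoeffN oppr_ge0 => h1.
    by apply/eqP; rewrite eq_le h1 nE //; lia.
  have EK1 : E K.-1 = 0.
    by have := chain (K.-1 - i0)%N; rewrite subnKC; [apply; lia | lia].
  have TK : T K = 0.
    by rewrite /T EK1 mulr0 /E /Hext eqxx; case: eqP => [K00|]; [lia| rewrite subrr].
  have hcK : pihomog mdeg (K * m) G = 0 by rewrite hcT ?TK //; lia.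
  have dl : mdeg (mlead G) = (K * m)%N.
    by have := mlead_deg G0; rewrite szG => -[].
  have := @mcoeff_hc 2 R (K * m) G (mlead G); rewrite hcK mcoeff0 dl eqxx => /esym/eqP.
  by rewrite mcoeff_eq0 (mlead_supp G0).
have per : forall j, (1 <= j <= K)%N ->
    (size (msupp (E j.-1)) + m <= size (msupp (T j)) + size (msupp (E j)))%N.
  move=> j jK.
  have [_ h1] := @F_supp R m _ (nE j.-1 ltac:(lia)) (nzE j.-1 ltac:(lia)).
  have h2 := @supp_sub _ (Fpoly R m * E j.-1) (E j).
  exact: (leq_trans h1 h2).
have tele : forall k, (k <= K)%N -> (size (msupp (E 0%N)) + k * m <=
    \sum_(1 <= j < k.+1) size (msupp (T j)) + size (msupp (E k)))%N.
  elim => [|k IH] kK; first by rewrite big_geq // mul0n addn0 add0n.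
  rewrite big_nat_recr //=; have := IH (ltnW kK); have := per k.+1 ltac:(lia).
  rewrite /= mulSn; lia.
have := tele K (leqnn K).
have E0 : E 0%N = 1 by rewrite /E /Hext eqxx.
have EK : E K = 0 by rewrite /E /Hext eqxx; case: eqP => //; lia.
rewrite E0 EK msupp1 msupp0 /= => h.
have : (\sum_(1 <= j < K.+1) size (msupp (T j)) <= Nmon G)%N.
  rewrite (eq_big_nat _ _ (F2 := fun j => size (msupp (pihomog mdeg (j * m) G)))); last first.
    by move=> j jK; rewrite hcT.
  apply: leq_trans (@count_sum _ (msupp G) (@mdeg 2) K m m0).
  by apply: leq_sum => j _; exact: hc_size.
lia.
Qed.

Section Part1.
Variable R : rcfType.
Local Open Scope complex_scope.

Lemma hc_cplx d (P : {mpoly R[2]}) : cplx (pihomog mdeg d P) = pihomog mdeg d (cplx P).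
Proof.
apply/mpolyP => mo; rewrite /cplx mcoeff_map_mpoly !mcoeff_hc mcoeff_map_mpoly.
by case: ifP; rewrite ?rmorph0.
Qed.

Lemma meval_decomp (S : comNzRingType) (P : {mpoly S[2]}) N v :
  (msize P <= N)%N -> P.@[v] = \sum_(d < N) (pihomog mdeg d P).@[v].
Proof.
by move=> hN; rewrite {1}(pihomog_partitionE hN) raddf_sum.
Qed.

Lemma hc_nondiv m (eta : R[i]) (G : {mpoly R[2]}) d :
  m.-primitive_root eta ->
  (forall x y : R[i],
      (cplx G).@[pt (eta * x) (eta * y)] = (cplx G).@[pt x y]) ->
  ~~ (m %| d)%N -> pihomog mdeg d G = 0.
Proof.
move=> prim inv ndiv.
pose Q := cplx G; pose N := maxn (msize Q) d.+1.
have hN : (msize Q <= N)%N by rewrite leq_maxl.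
have dN : (d < N)%N by rewrite leq_maxr.
have Q0 : pihomog mdeg d Q = 0.
  apply: (@homog_zero _ d); first exact: pihomogP.
  move=> k; set X := (1 : R[i]); set Y := (k.+1%:R : R[i]).
  pose e i := (pihomog mdeg i Q).@[pt X Y].
  have Qs : forall s, Q.@[pt (s * X) (s * Y)] = \sum_(i < N) s ^+ i * e i.
    move=> s; rewrite (@meval_decomp _ _ _ _ hN); apply: eq_bigr => i _.
    by rewrite (@meval_scale _ i) //; exact: pihomogP.
  pose r := \poly_(i < N) ((eta ^+ i - 1) * e i).
  have r0 : r = 0.
    apply: poly_nat_roots => j; rewrite horner_poly.
    have := inv (j.+1%:R * X) (j.+1%:R * Y); rewrite !mulrA !Qs => E.
    apply: etrans (_ : _ = \sum_(i < N) (eta * j.+1%:R) ^+ i * e i - \sum_(i < N) j.+1%:R ^+ i * e i) _; last by rewrite E subrr.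
    rewrite -sumrB; apply: eq_bigr => i _; rewrite exprMn.
    move: (eta ^+ i) (e i) (j.+1%:R ^+ i : R[i]) => u v w; ring.
  have := congr1 (fun p : {poly R[i]} => p`_d) r0; rewrite coef_poly dN coef0.
  move/eqP; rewrite mulf_eq0 => /orP[|/eqP //].
  by rewrite subr_eq0 -(prim_order_dvd prim) (negbTE ndiv).
apply/mpolyP => mo; rewrite mcoeff0.
have := congr1 (mcoeff mo) Q0; rewrite /Q -hc_cplx /cplx mcoeff_map_mpoly mcoeff0.
by move/eqP; rewrite fmorph_eq0 => /eqP.
Qed.

Lemma hc0 (G : {mpoly R[2]}) : G.@[pt 0 0] = 0 -> pihomog mdeg 0 G = 0.
Proof.
move=> G00.
have z : forall d (P : {mpoly R[2]}), P \is d.-homog -> P.@[pt 0 0] = 0 ^+ d * P.@[pt 0 0].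
  by move=> d P hP; have := @meval_scale _ d P 0 0 0 hP; rewrite mul0r.
have hN : (msize G <= (msize G).+1)%N by [].
have : G.@[pt 0 0] = (pihomog mdeg 0 G).@[pt 0 0].
  rewrite (@meval_decomp _ _ _ _ hN) big_ord_recl /= big1 ?addr0 //.
  by move=> i _; rewrite (z i.+1) ?expr0n ?mul0r //; exact: pihomogP.
rewrite G00 => /esym P00.
apply: (@homog_zero _ 0); first exact: pihomogP.
move=> k; have := @meval_scale _ 0 (pihomog mdeg 0 G) 0 1 k.+1%:R (pihomogP _ _ _).
by rewrite !mul0r expr0 mul1r P00.
Qed.

Lemma decomp m K (G : {mpoly R[2]}) :
  (0 < m)%N -> msize G = (K * m).+1 ->
  (forall d, ~~ (m %| d)%N -> pihomog mdeg d G = 0) ->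
  pihomog mdeg 0 G = 0 ->
  G = \sum_(1 <= j < K.+1) pihomog mdeg (j * m) G.
Proof.
move=> m0 szG hnd h0; apply/mpolyP => mo; rewrite raddf_sum /=.
under eq_bigr => j _ do rewrite mcoeff_hc.
have [mo_in|mo_nin] := boolP (mo \in msupp G); last first.
  by rewrite big1 ?(memN_msupp_eq0 mo_nin) // => j _; case: ifP.
have c0 : G@_mo != 0 by rewrite -mcoeff_msupp.
have lt : (mdeg mo < (K * m).+1)%N by rewrite -szG; exact: msize_mdeg_lt.
have dv : (m %| mdeg mo)%N.
  apply/negPn/negP => nd; move: c0; have := @mcoeff_hc 2 R (mdeg mo) G mo.
  by rewrite hnd // mcoeff0 eqxx => <-; rewrite eqxx.
have nz : mdeg mo != 0%N.
  apply/negP => /eqP e; move: c0; have := @mcoeff_hc 2 R 0 G mo.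
  by rewrite h0 mcoeff0 e eqxx => <-; rewrite eqxx.
set j0 := (mdeg mo %/ m)%N.
have ej : mdeg mo = (j0 * m)%N by rewrite divnK.
rewrite -big_mkcond /=.
rewrite (eq_bigl (fun j => j == j0)); last by move=> j; rewrite ej eqn_pmul2r // eq_sym.
rewrite big_pred1_seq //; first exact: iota_uniq.
rewrite mem_index_iota; apply/andP; split.
  by rewrite lt0n; apply: contraNneq nz => j00; rewrite ej j00.
by rewrite ltnS -(leq_pmul2r m0) -ej -ltnS.
Qed.

End Part1.

Fixpoint hrec (S : nzRingType) (F : {mpoly S[2]}) (g : nat -> {mpoly S[2]}) (j : nat)
  : {mpoly S[2]} :=
  match j with 0 => 1 | j'.+1 => F * hrec _ F g j' - g j'.+1 end.

Lemma part1 (R : rcfType) m K (G : {mpoly R[2]}) :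
  (0 < m)%N -> (0 < K)%N -> msize G = (K * m).+1 ->
  (forall x y : R, x + y = 1 -> G.@[pt x y] = 1) ->
  (forall d, ~~ (m %| d)%N -> pihomog mdeg d G = 0) ->
  pihomog mdeg 0 G = 0 ->
  exists H : nat -> {mpoly R[2]},
      (forall j, (1 <= j <= K.-1)%N -> H j \is (j * m).-homog) /\
      G = telescope m K H.
Proof.
move=> m0 K0 szG line hnd h0.
have dec := @decomp R m K G m0 szG hnd h0.
pose g j := pihomog mdeg (j * m) G.
pose H := hrec _ (Fpoly R m) g.
have hH : forall j, H j \is (j * m).-homog.
  elim => [|j IH] /=; first by rewrite mul0n dhomog1.
  apply: rpredB; last exact: pihomogP.
  by rewrite mulSn; apply: dhomogM => //; exact: F_homog.
have Fev : forall a b : R, a + b = 1 -> (Fpoly R m).@[pt a b] = 1.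
  by move=> a b ab; rewrite /Fpoly rmorphXn rmorphD /= !mevalXU /= ab expr1n.
have Hev : forall a b : R, a + b = 1 -> forall j,
    (H j).@[pt a b] = 1 - \sum_(1 <= i < j.+1) (g i).@[pt a b].
  move=> a b ab; elim => [|j IH]; first by rewrite big_geq // subr0 /= meval1.
  rewrite /= rmorphB rmorphM /= Fev // mul1r IH [in RHS]big_nat_recr //=.
  by rewrite opprD addrA.
have HK : H K = 0.
  apply: (@homog_zero _ (K * m)); first exact: hH.
  move=> k; set t : R := k.+1%:R; set s : R := 1 + t.
  have tp : 0 <= t := ler0n _ _.
  have s0 : s != 0 by apply: lt0r_neq0; rewrite /s; lra.
  have -> : pt 1 t = pt (s * s^-1) (s * (t * s^-1)).
    by rewrite mulfV // mulrCA mulfV // mulr1.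
  rewrite (@meval_scale _ (K * m)) ?hH // Hev; last first.
    by rewrite -{1}[s^-1]mul1r -mulrDl -/s mulfV.
  have : G.@[pt s^-1 (t * s^-1)] = 1 by apply: line; rewrite -{1}[s^-1]mul1r -mulrDl -/s mulfV.
  rewrite {1}dec raddf_sum /= => ->.
  by rewrite subrr mulr0.
exists H; split; first by move=> j _; exact: hH.
rewrite /telescope {1}dec; apply: eq_big_nat => j /andP[j1 jK].
have hE : forall i, (i <= K)%N -> Hext K H i = H i.
  move=> i iK; rewrite /Hext; case: eqP => [->//|_].
  by case: eqP => [->|_]; rewrite ?HK.
rewrite !hE; [|lia|lia].
case: j j1 jK => [//|j] _ _ /=.
by rewrite subKr.
Qed.

Theorem theorem4p1 (R : rcfType) (m : nat) (eta : R[i]) (G : {mpoly R[2]})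
  (K : nat) :
  (2 <= m)%N ->
  m.-primitive_root eta ->
  (forall x y : R[i],
      (cplx G).@[pt (eta * x) (eta * y)] = (cplx G).@[pt x y]) ->
  (forall x y : R, x + y = 1 -> G.@[pt x y] = 1) ->
  nonneg_coefs G ->
  G.@[pt 0 0] = 0 ->
  (0 < K)%N ->
  msize G = (K * m).+1 ->
  (exists H : nat -> {mpoly R[2]},
      (forall j, (1 <= j <= K.-1)%N -> H j \is (j * m).-homog) /\
      G = telescope m K H)
  /\
  (forall H : nat -> {mpoly R[2]},
      (forall j, (1 <= j <= K.-1)%N -> H j \is (j * m).-homog) ->
      G = telescope m K H ->
      (forall j, (1 <= j <= K.-1)%N -> nonneg_coefs (H j)) ->
      ((K * m).+1 <= Nmon G)%N).
Proof.
move=> m2 prim inv line nnG G00 K0 szG.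
have m0 : (0 < m)%N by apply: leq_trans m2.
split.
  apply: (@part1 R m K G m0 K0 szG line).
    by move=> d nd; exact: (@hc_nondiv R m eta G d prim inv nd).
  exact: (@hc0 R G G00).
by move=> H hH hG nH; exact: (@part2 R m K G H m0 K0 nnG szG hH hG nH).
Qed.
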